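(* Let $\boldsymbol{X}$ be an $\boldsymbol{\mathcal{L}}_\Lambda$ modal space, where $\mathcal{L}$ is based on a finite atom set $\Phi$ and modal equivalence and bisimilarity coincide on $X$. Then $\mathcal{D}_{\boldsymbol{X}}$ contains a metric $d_w$ inducing the same topology on $\boldsymbol{X}$ as the $n$-bisimulation metric $d_B$.
   Context: Given a set $\Phi$ of atoms and a finite set $I$ of agents, $\mathcal{L}$ is the modal language $\varphi::=\top\mid p\mid\neg\varphi\mid\varphi\wedge\varphi\mid\square_i\varphi$. A logic $\Lambda$ is a normal modal logic over $\mathcal{L}$ extending $K$; $\boldsymbol{\varphi}$ is the class of formulas $\Lambda$-equivalent to $\varphi$ and $\boldsymbol{\mathcal{L}}_\Lambda$ the set of such classes. Kripke models have countable nonempty state sets, relations $R_i$ ($i\in I$) and a valuation; pointed models are evaluated with standard semantics. For a set $X$ of pointed Kripke models, the $\boldsymbol{\mathcal{L}}_\Lambda$ modal space is $\boldsymbol{X}=\{\boldsymbol{x}:x\in X\}$ with $\boldsymbol{x}=\{y\in X:y\vDash\varphi\text{ iff }x\vDash\varphi\text{ for all }\varphi\}$. The $n$-bisimulation metric is $d_B(\boldsymbol{x},\boldsymbol{y})=0$ if $x,y$ are $n$-bisimilar for all $n\in\mathbb{N}_0$, and $2^{-n}$ for the least $n$ such that $x,y$ are not $n$-bisimilar. Metric family: let $D\subseteq\boldsymbol{\mathcal{L}}_\Lambda$ be such that for every $\boldsymbol{\psi}$ there is a finite $D_\psi\subseteq D$ such that any $x,y\in X$ satisfying exactly the same elements of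 $D_\psi$ agree on $\psi$; enumerate $D$ as $\boldsymbol{\varphi}_1,\boldsymbol{\varphi}_2,\dots$; let $d_k(\boldsymbol{x},\boldsymbol{y})=0$ if ($x\vDash\varphi_k$ iff $y\vDash\varphi_k$) and $1$ otherwise; let $w:D\to\mathbb{R}_{>0}$ have $\sum_k w(\boldsymbol{\varphi}_k)<\infty$; and set $d_w=\sum_k w(\boldsymbol{\varphi}_k)d_k$. $\mathcal{D}_{\boldsymbol{X}}$ is the set of all such $d_w$. *)

(* Defs.v *)
From Stdlib Require Import Reals List Arith ClassicalEpsilon.
From Coquelicot Require Import Coquelicot.
Open Scope R_scope.
Set Implicit Arguments.


Section Modal.
Variables (Atm Ag : Type).

Inductive form : Type :=
| FTop : form
| FAtom : Atm -> form
| FNeg : form -> form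
| FAnd : form -> form -> form
| FBox : Ag -> form -> form.

Definition FImpl (f g : form) : form := FNeg (FAnd f (FNeg g)).
Definition FIff (f g : form) : form := FAnd (FImpl f g) (FImpl g f).

(** Propositional tautologies: true under every boolean valuation of the
    atoms and of the boxed subformulas (treated as propositional letters). *)
Fixpoint peval (v : form -> bool) (f : form) : bool :=
  match f with
  | FTop => true
  | FAtom p => v (FAtom p)
  | FNeg g => negb (peval v g)
  | FAnd g h => andb (peval v g) (peval v h)
  | FBox i g => v (FBox i g)
  end.

Definition tautology (f : form) : Prop := forall v, peval v f = true.

Fixpoint subst (s : Atm -> form) (f : form) : form :=
  match f with
  | FTop => FTop
  | FAtom p => s p
  | FNeg g => FNeg (subst s g)
  | FAnd g h => FAnd (subst s g) (subst s h)
  | FBox i g => FBox i (subst s g)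
  end.

Definition normal_logic (L : form -> Prop) : Prop :=
  (forall f, tautology f -> L f) /\
  (forall i f g, L (FImpl (FBox i (FImpl f g)) (FImpl (FBox i f) (FBox i g)))) /\
  (forall f g, L (FImpl f g) -> L f -> L g) /\
  (forall i f, L f -> L (FBox i f)) /\
  (forall s f, L f -> L (subst s f)).

Definition lequiv (L : form -> Prop) (f g : form) : Prop := L (FIff f g).

Record model : Type := Model {
  st : Type;
  rel : Ag -> st -> st -> Prop;
  val : st -> Atm -> Prop;
  st_countable : exists c : st -> nat, forall s t, c s = c t -> s = t;
  st_nonempty : inhabited st
}.

Record pointed : Type := Pointed { pmod : model; ppt : st pmod }.

Fixpoint sat (M : model) (s : st M) (f : form) : Prop :=
  match f with
  | FTop => True
  | FAtom p => val M s p
  | FNeg g => ~ sat M s g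
  | FAnd g h => sat M s g /\ sat M s h
  | FBox i g => forall t, rel M i s t -> sat M t g
  end.

Definition psat (x : pointed) (f : form) : Prop := sat (pmod x) (ppt x) f.

Definition modeq (x y : pointed) : Prop := forall f, psat x f <-> psat y f.

Definition bisimilar (x y : pointed) : Prop :=
  exists Z : st (pmod x) -> st (pmod y) -> Prop,
    Z (ppt x) (ppt y) /\
    forall s t, Z s t ->
      (forall p, val (pmod x) s p <-> val (pmod y) t p) /\
      (forall i s', rel (pmod x) i s s' -> exists t', rel (pmod y) i t t' /\ Z s' t') /\
      (forall i t', rel (pmod y) i t t' -> exists s', rel (pmod x) i s s' /\ Z s' t').

Fixpoint nbisim (M N : model) (n : nat) (s : st M) (t : st N) : Prop :=
  (forall p, val M s p <-> val N t p) /\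
  match n with
  | O => True
  | S m =>
      (forall i s', rel M i s s' -> exists t', rel N i t t' /\ nbisim M N m s' t') /\
      (forall i t', rel N i t t' -> exists s', rel M i s s' /\ nbisim M N m s' t')
  end.

Definition pnbisim (n : nat) (x y : pointed) : Prop :=
  @nbisim (pmod x) (pmod y) n (ppt x) (ppt y).

Definition least_non_bisim (x y : pointed) : nat :=
  epsilon (inhabits 0%nat)
    (fun n => ~ pnbisim n x y /\ forall m, (m < n)%nat -> pnbisim m x y).

Definition dB (x y : pointed) : R :=
  if excluded_middle_informative (forall n, pnbisim n x y) then 0
  else (/ 2) ^ (least_non_bisim x y).

Definition open_in (X : pointed -> Prop) (d : pointed -> pointed -> R)
  (U : pointed -> Prop) : Prop :=
  (forall x, U x -> X x) /\
  forall x, U x -> exists eps, 0 < eps /\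
    forall y, X y -> d x y < eps -> U y.

Definition same_topology (X : pointed -> Prop)
  (d1 d2 : pointed -> pointed -> R) : Prop :=
  forall U, open_in X d1 U <-> open_in X d2 U.

(** D is enumerated (injectively up to Lambda-equivalence)
    by representatives phi_k for the indices k valid w.r.t. len
    (len = None: infinitely many, len = Some N: indices k < N). *)
Definition validb (len : option nat) (k : nat) : bool :=
  match len with None => true | Some N => Nat.ltb k N end.

Definition dk (x y : pointed) (f : form) : R :=
  if excluded_middle_informative (psat x f <-> psat y f) then 0 else 1.

Definition dw (len : option nat) (phi : nat -> form) (w : nat -> R)
  (x y : pointed) : R :=
  Series (fun k => if validb len k then w k * dk x y (phi k) else 0).

Definition in_metric_family (L : form -> Prop) (X : pointed -> Prop)
  (d : pointed -> pointed -> R) : Prop :=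
  exists (len : option nat) (phi : nat -> form) (w : nat -> R),
    (forall j k, validb len j = true -> validb len k = true -> j <> k ->
        ~ lequiv L (phi j) (phi k)) /\
    (forall psi, exists Dpsi : list nat,
        (forall k, In k Dpsi -> validb len k = true) /\
        forall x y, X x -> X y ->
          (forall k, In k Dpsi -> (psat x (phi k) <-> psat y (phi k))) ->
          (psat x psi <-> psat y psi)) /\
    (forall k, validb len k = true -> 0 < w k) /\
    ex_series (fun k => if validb len k then w k else 0) /\
    (forall x y, X x -> X y -> d x y = dw len phi w x y).

End Modal.

(* Main.v *)
Require Import Defs.
From Stdlib Require Import Reals List Lia Classical ClassicalEpsilon Cantor Wf_nat Lra Psatz.
From Coquelicot Require Import Coquelicot.
Open Scope R_scope.
Set Implicit Arguments.

Section Char.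
Variables (Atm Ag : Type).
Notation F := (form Atm Ag).

Definition conj (l : list F) : F := fold_right (@FAnd Atm Ag) (FTop Atm Ag) l.
Definition disj (l : list F) : F := FNeg (conj (map (@FNeg Atm Ag) l)).
Definition dia (i : Ag) (f : F) : F := FNeg (FBox i (FNeg f)).

Lemma sat_conj M s l : sat M s (conj l) <-> forall f, In f l -> sat M s f.
Proof.
  induction l as [|a l IH]; simpl.
  - split; [intros _ f []|auto].
  - rewrite IH. split.
    + intros [H1 H2] f [<-|Hf]; auto.
    + intros H; split; auto.
Qed.

Lemma sat_disj M s l : sat M s (disj l) <-> exists f, In f l /\ sat M s f.
Proof.
  unfold disj; simpl; rewrite sat_conj. split.
  - intro H; apply NNPP; intro H'; apply H; intros g Hg.
    apply in_map_iff in Hg; destruct Hg as [f [<- Hf]]; simpl; intro; apply H'; eauto.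
  - intros [f [Hf Hs]] H; apply (H (FNeg f)); [apply in_map; auto | simpl; auto].
Qed.

Lemma sat_dia M s i f : sat M s (dia i f) <-> exists t, rel M i s t /\ sat M t f.
Proof.
  unfold dia; simpl. split.
  - intro H; apply NNPP; intro H'; apply H; intros t Ht Hs; apply H'; eauto.
  - intros [t [Ht Hs]] H; exact (H t Ht Hs).
Qed.

Fixpoint choices {A} (ls : list (list A)) : list (list A) :=
  match ls with
  | nil => nil :: nil
  | l :: ls' => flat_map (fun a => map (cons a) (choices ls')) l
  end.

Lemma choices_in {A} (ls : list (list A)) c : Forall2 (@In A) c ls -> In c (choices ls).
Proof.
  intro H; induction H; simpl; auto.
  apply in_flat_map; exists x; split; auto. apply in_map; auto.
Qed.

Lemma choices_out {A} (ls : list (list A)) c : In c (choices ls) -> Forall2 (@In A) c ls.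
Proof.
  revert c; induction ls as [|l ls IH]; simpl; intros c H.
  - destruct H as [<-|[]]; constructor.
  - apply in_flat_map in H; destruct H as [a [Ha H]].
    apply in_map_iff in H; destruct H as [c' [<- Hc']]. constructor; auto.
Qed.

Lemma forall2_map {A B} {G : B -> list A} {cs l i} :
  Forall2 (@In A) cs (map G l) -> In i l -> exists c, In c (G i) /\ In c cs.
Proof.
  revert cs; induction l as [|b l IH]; simpl; intros cs H Hi; [destruct Hi|].
  destruct cs as [|x cs']; [inversion H|]. apply Forall2_cons_iff in H; destruct H as [Hx Hl].
  destruct Hi as [<-|Hi].
  - exists x; simpl; auto.
  - destruct (IH cs' Hl Hi) as [c [H1 H2]]; exists c; simpl; auto.
Qed.

Lemma forall2_mapmap {A B} (g : B -> A) (G : B -> list A) l :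
  (forall i, In (g i) (G i)) -> Forall2 (@In A) (map g l) (map G l).
Proof. intro H; induction l; simpl; constructor; auto. Qed.

Fixpoint powerset {A} (l : list A) : list (list A) :=
  match l with
  | nil => nil :: nil
  | a :: l' => map (cons a) (powerset l') ++ powerset l'
  end.

Lemma powerset_incl {A} (l S : list A) : In S (powerset l) -> incl S l.
Proof.
  revert S; induction l as [|a l IH]; simpl; intros S H.
  - destruct H as [<-|[]]; intros x [].
  - apply in_app_or in H; destruct H as [H|H].
    + apply in_map_iff in H; destruct H as [S' [<- H]].
      intros x [<-|Hx]; simpl; auto. right; exact (IH _ H x Hx).
    + intros x Hx; right; exact (IH _ H x Hx).
Qed.

Lemma filter_powerset {A} (p : A -> bool) l : In (filter p l) (powerset l).
Proof.
  induction l as [|a l IH]; simpl; auto.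
  destruct (p a); apply in_or_app; [left; apply in_map|right]; auto.
Qed.

Variables (la : list Atm) (lg : list Ag).
Hypothesis Hla : forall p, In p la.
Hypothesis Hlg : forall i, In i lg.

Definition lits : list (list F) := map (fun p => FAtom Ag p :: FNeg (FAtom Ag p) :: nil) la.
Definition F0 : list F := map conj (choices lits).
Definition agentpart (i : Ag) (S : list F) : F := FAnd (conj (map (dia i) S)) (FBox i (disj S)).

Fixpoint Fn (n : nat) : list F :=
  match n with
  | O => F0
  | S m => flat_map (fun v => map (fun cs => conj (v :: cs))
             (choices (map (fun i => map (agentpart i) (powerset (Fn m))) lg))) F0
  end.

Lemma A0 v M N s t : In v F0 -> sat M s v -> sat N t v -> forall p, val M s p <-> val N t p.
Proof.
  unfold F0; intros Hv Hs Ht p. apply in_map_iff in Hv; destruct Hv as [c [<- Hc]].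
  apply choices_out in Hc. unfold lits in Hc. rewrite sat_conj in Hs, Ht.
  destruct (forall2_map Hc (Hla p)) as [f [Hf Hfc]].
  specialize (Hs f Hfc); specialize (Ht f Hfc).
  destruct Hf as [<-|[<-|[]]]; simpl in *; tauto.
Qed.

Lemma B0 M s : exists v, In v F0 /\ sat M s v.
Proof.
  exists (conj (map (fun p => if excluded_middle_informative (val M s p) then FAtom Ag p
                              else FNeg (FAtom Ag p)) la)).
  split.
  - unfold F0; apply in_map. apply choices_in. unfold lits.
    clear Hla. induction la as [|p l IH]; simpl; constructor; auto.
    destruct (excluded_middle_informative (val M s p)); simpl; auto.
  - apply sat_conj; intros f Hf. apply in_map_iff in Hf; destruct Hf as [p [<- _]].
    destruct (excluded_middle_informative (val M s p)); simpl; auto.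
Qed.

Lemma AB n :
  (forall chi, In chi (Fn n) -> forall M N s t, sat M s chi -> sat N t chi -> nbisim M N n s t) /\
  (forall M s, exists chi, In chi (Fn n) /\ sat M s chi).
Proof.
  induction n as [|n [IHA IHB]]; split.
  - simpl; intros chi H M N s t Hs Ht; split; [intro p; eapply A0; eauto|exact I].
  - exact B0.
  - simpl; intros chi H M N s t Hs Ht.
    apply in_flat_map in H; destruct H as [v [Hv H]].
    apply in_map_iff in H; destruct H as [cs [<- Hcs]]. apply choices_out in Hcs.
    destruct Hs as [Hsv Hs]; destruct Ht as [Htv Ht]; rewrite sat_conj in Hs, Ht.
    split; [intro p; eapply A0; [exact Hv|exact Hsv|exact Htv]|].
    split.
    + intros i s' Hr.
      destruct (forall2_map Hcs (Hlg i)) as [c [Hc Hccs]].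
      apply in_map_iff in Hc; destruct Hc as [S0 [<- HS]].
      assert (Hs1 := Hs _ Hccs); assert (Ht1 := Ht _ Hccs).
      destruct Hs1 as [_ Hsb]; destruct Ht1 as [Htd _].
      specialize (Hsb s' Hr); apply sat_disj in Hsb; destruct Hsb as [f [Hf Hsf]].
      rewrite sat_conj in Htd. specialize (Htd (dia i f) (in_map _ _ _ Hf)).
      apply sat_dia in Htd; destruct Htd as [t' [Hrt Htf]].
      exists t'; split; auto. apply (IHA f); auto. exact (powerset_incl _ _ HS f Hf).
    + intros i t' Hr.
      destruct (forall2_map Hcs (Hlg i)) as [c [Hc Hccs]].
      apply in_map_iff in Hc; destruct Hc as [S0 [<- HS]].
      assert (Hs1 := Hs _ Hccs); assert (Ht1 := Ht _ Hccs).
      destruct Ht1 as [_ Htb]; destruct Hs1 as [Hsd _].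
      specialize (Htb t' Hr); apply sat_disj in Htb; destruct Htb as [f [Hf Htf]].
      rewrite sat_conj in Hsd. specialize (Hsd (dia i f) (in_map _ _ _ Hf)).
      apply sat_dia in Hsd; destruct Hsd as [s' [Hrs Hsf]].
      exists s'; split; auto. apply (IHA f); auto. exact (powerset_incl _ _ HS f Hf).
  - intros M s. destruct (B0 M s) as [v [Hv Hsv]].
    set (Si := fun i => filter (fun chi => if excluded_middle_informative
               (exists s', rel M i s s' /\ sat M s' chi) then true else false) (Fn n)).
    exists (conj (v :: map (fun i => agentpart i (Si i)) lg)). split.
    + apply in_flat_map; exists v; split; auto. apply (in_map (fun cs => conj (v :: cs))). apply choices_in.
      apply forall2_mapmap. intro i. apply in_map. unfold Si. apply filter_powerset.
    + apply sat_conj; intros f [<-|Hf]; auto.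
      apply in_map_iff in Hf; destruct Hf as [i [<- _]]. split.
      * apply sat_conj; intros g Hg. apply in_map_iff in Hg; destruct Hg as [chi [<- Hchi]].
        apply sat_dia. unfold Si in Hchi; apply filter_In in Hchi; destruct Hchi as [_ H].
        destruct (excluded_middle_informative _); [auto|discriminate].
      * intros s' Hr. apply sat_disj. destruct (IHB M s') as [chi [Hchi Hs']].
        exists chi; split; auto. unfold Si; apply filter_In; split; auto.
        destruct (excluded_middle_informative _) as [|C]; auto. exfalso; apply C; eauto.
Qed.

Lemma char_formula n (x : pointed Atm Ag) : exists chi, In chi (Fn n) /\ psat x chi /\
  forall y, psat y chi -> pnbisim n x y.
Proof.
  destruct (AB n) as [HA HB]. destruct (HB _ (ppt x)) as [chi [H1 H2]].
  exists chi; split; auto; split; auto. intros y Hy; exact (HA chi H1 _ _ _ _ H2 Hy).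
Qed.

End Char.

Section Pres.
Variables (Atm Ag : Type).
Fixpoint depth (f : form Atm Ag) : nat :=
  match f with
  | FTop => 0 | FAtom _ => 0 | FNeg g => depth g
  | FAnd g h => Nat.max (depth g) (depth h) | FBox _ g => S (depth g)
  end.

Lemma preserve f : forall n M N s t, (depth f <= n)%nat -> @nbisim Atm Ag M N n s t ->
  (sat M s f <-> sat N t f).
Proof.
  induction f as [| p | g IH | g IHg h IHh | i g IH]; simpl; intros n M N s t Hd Hb.
  - tauto.
  - destruct n; apply Hb.
  - rewrite (IH n M N s t Hd Hb); tauto.
  - rewrite (IHg n M N s t) by (auto; lia). rewrite (IHh n M N s t) by (auto; lia). tauto.
  - destruct n as [|m]; [lia|]. destruct Hb as [_ [Hf Hbk]]. split.
    + intros H t' Hr. destruct (Hbk i t' Hr) as [s' [Hr' Hb']].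
      apply (IH m M N s' t'); auto; lia.
    + intros H s' Hr. destruct (Hf i s' Hr) as [t' [Hr' Hb']].
      apply (IH m M N s' t'); auto; lia.
Qed.

Lemma nbisim_mono n : forall M N s t, @nbisim Atm Ag M N (S n) s t -> nbisim M N n s t.
Proof.
  induction n as [|n IH]; simpl; intros M N s t [Hv [Hf Hb]].
  - split; auto.
  - split; auto. split.
    + intros i s' Hr; destruct (Hf i s' Hr) as [t' [? ?]]; eauto.
    + intros i t' Hr; destruct (Hb i t' Hr) as [s' [? ?]]; eauto.
Qed.

Lemma nbisim_le m n M N s t : (m <= n)%nat -> @nbisim Atm Ag M N n s t -> nbisim M N m s t.
Proof. induction 1; auto. intro Hb; apply IHle; apply nbisim_mono; auto. Qed.
End Pres.

Lemma least_ex (P : nat -> Prop) n : P n -> exists m, P m /\ forall k, (k < m)%nat -> ~ P k.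
Proof.
  induction n as [n IH] using lt_wf_ind. intro Hn.
  destruct (classic (exists k, (k < n)%nat /\ P k)) as [[k [Hk Pk]]|H].
  - exact (IH k Hk Pk).
  - exists n; split; auto. intros k Hk Pk; apply H; eauto.
Qed.

Section Dedupe.
Variables (A : Type) (E : A -> A -> Prop).
Hypotheses (Erefl : forall a, E a a) (Esym : forall a b, E a b -> E b a)
  (Etrans : forall a b c, E a b -> E b c -> E a c).
Variable e : nat -> A.

Definition Pn k := forall j, (j < k)%nat -> ~ E (e j) (e k).

Lemma cover n : exists k, Pn k /\ E (e k) (e n).
Proof.
  induction n as [n IH] using lt_wf_ind.
  destruct (classic (Pn n)) as [H|H].
  - exists n; auto.
  - apply not_all_ex_not in H; destruct H as [j H].
    apply imply_to_and in H; destruct H as [Hj H]. apply NNPP in H.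
    destruct (IH j Hj) as [k [Pk Ek]]. exists k; split; eauto.
Qed.

Definition pb k : nat := if excluded_middle_informative (Pn k) then 1%nat else 0%nat.
Fixpoint cnt k : nat := match k with O => O | S k => (cnt k + pb k)%nat end.

Lemma cnt_mono a b : (a <= b)%nat -> (cnt a <= cnt b)%nat.
Proof. induction 1; simpl; lia. Qed.

Lemma cnt_strict a b : Pn a -> (a < b)%nat -> (cnt a < cnt b)%nat.
Proof.
  intros Pa Hab. apply (Nat.lt_le_trans _ (cnt (S a))).
  - simpl; unfold pb; destruct (excluded_middle_informative (Pn a)); [lia|contradiction].
  - apply cnt_mono; lia.
Qed.

Lemma cnt_inj a b : Pn a -> Pn b -> cnt a = cnt b -> a = b.
Proof.
  intros Pa Pb H. destruct (Nat.lt_trichotomy a b) as [h|[h|h]]; auto.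
  - pose proof (cnt_strict Pa h); lia.
  - pose proof (cnt_strict Pb h); lia.
Qed.

Lemma hit B m : (m < cnt B)%nat -> exists k, (k < B)%nat /\ Pn k /\ cnt k = m.
Proof.
  induction B as [|B IH]; simpl; intro H; [lia|].
  unfold pb in H; destruct (excluded_middle_informative (Pn B)) as [PB|PB].
  - destruct (Nat.eq_dec m (cnt B)) as [->|Hm].
    + exists B; auto.
    + destruct (IH ltac:(lia)) as [k [? ?]]; exists k; split; [lia|auto].
  - destruct (IH ltac:(lia)) as [k [? ?]]; exists k; split; [lia|auto].
Qed.

Definition gidx m : nat := epsilon (inhabits O) (fun k => Pn k /\ cnt k = m).

Lemma dedupe : exists (len : option nat) (phi : nat -> A),
  (forall j k, validb len j = true -> validb len k = true -> j <> k -> ~ E (phi j) (phi k)) /\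
  (forall n, exists j, validb len j = true /\ E (e n) (phi j)) /\
  (forall j, exists n, phi j = e n).
Proof.
  assert (core : forall len : option nat,
    (forall m, validb len m = true -> exists k, Pn k /\ cnt k = m) ->
    (forall k, Pn k -> validb len (cnt k) = true) ->
    exists (phi : nat -> A),
    (forall j k, validb len j = true -> validb len k = true -> j <> k -> ~ E (phi j) (phi k)) /\
    (forall n, exists j, validb len j = true /\ E (e n) (phi j)) /\
    (forall j, exists n, phi j = e n)).
  { intros len H1 H2. exists (fun j => e (gidx j)).
    assert (Hs : forall m, validb len m = true -> Pn (gidx m) /\ cnt (gidx m) = m).
    { intros m Hm. unfold gidx. apply epsilon_spec. apply H1; auto. }
    split; [|split].
    - intros j k Hj Hk Hjk HE.
      destruct (Hs j Hj) as [Pj Cj]; destruct (Hs k Hk) as [Pk Ck].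
      destruct (Nat.lt_trichotomy (gidx j) (gidx k)) as [h|[h|h]].
      + exact (Pk _ h HE).
      + apply Hjk; rewrite <- Cj, <- Ck, h; auto.
      + exact (Pj _ h (Esym HE)).
    - intro n. destruct (cover n) as [k [Pk Ek]].
      exists (cnt k). pose proof (H2 k Pk) as V. split; auto.
      destruct (Hs _ V) as [Pg Cg]. rewrite (cnt_inj Pg Pk Cg). auto.
    - intro j; eauto. }
  destruct (classic (exists B, forall k, (B <= k)%nat -> ~ Pn k)) as [[B HB]|HB].
  - exists (Some (cnt B)). apply core.
    + intros m Hm; simpl in Hm; apply Nat.ltb_lt in Hm.
      destruct (hit _ Hm) as [k [_ ?]]; eauto.
    + intros k Pk; simpl; apply Nat.ltb_lt. apply cnt_strict; auto.
      destruct (Nat.lt_ge_cases k B); auto. exfalso; exact (HB k H Pk).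
  - exists None. apply core; auto.
    assert (HI : forall B, exists k, (B <= k)%nat /\ Pn k).
    { intro B. apply NNPP; intro C; apply HB; exists B; intros k Hk Pk; apply C; eauto. }
    assert (HU : forall m, exists K, (m < cnt K)%nat).
    { induction m as [|m [K HK]].
      - destruct (HI O) as [k [_ Pk]]. exists (S k). pose proof (cnt_strict Pk (Nat.lt_succ_diag_r k)); lia.
      - destruct (HI K) as [k [Hk Pk]]. exists (S k).
        pose proof (cnt_strict Pk (Nat.lt_succ_diag_r k)). pose proof (cnt_mono Hk). lia. }
    intros m _. destruct (HU m) as [K HK]. destruct (hit _ HK) as [k [_ ?]]; eauto.
Qed.
End Dedupe.

Lemma half_pos k : 0 < (/2)^k.
Proof. apply pow_lt; lra. Qed.

Lemma half_lt n k : (n < k)%nat -> (/2)^k < (/2)^n.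
Proof.
  intro H. replace k with (n + (k - n))%nat by lia. rewrite pow_add.
  pose proof (half_pos n).
  assert ((/2)^(k-n) < 1) by (apply pow_lt_1_compat; [lra|lia]).
  pose proof (half_pos (k-n)). nra.
Qed.

Lemma half_le n k : (n <= k)%nat -> (/2)^k <= (/2)^n.
Proof. intro H; destruct (Nat.eq_dec n k) as [->|]; [lra|]. left; apply half_lt; lia. Qed.

Lemma geom_series : is_series (fun k => (/2)^k) 2.
Proof.
  assert (H := is_series_geom (/2) ltac:(rewrite Rabs_pos_eq; lra)).
  replace (/ (1 - /2)) with 2 in H by field. exact H.
Qed.

Lemma geom_dom (a : nat -> R) : (forall k, 0 <= a k <= (/2)^k) -> ex_series a.
Proof.
  intro Ha.
  apply (ex_series_le a (fun k => (/2)^k)).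
  - intro n. change (norm (a n)) with (Rabs (a n)). rewrite Rabs_pos_eq; apply Ha.
  - eexists; apply geom_series.
Qed.

Section Ser.
Variable a : nat -> R.
Hypothesis Ha : forall k, 0 <= a k <= (/2)^k.
Lemma S1 : ex_series a.
Proof. exact (geom_dom _ Ha). Qed.

Lemma Series_nonneg (b : nat -> R) : (forall k, 0 <= b k) -> ex_series b -> 0 <= Series b.
Proof.
  intros Hb Hex. replace 0 with (Series (fun n => 0 * b n)).
  - apply Series_le; auto. intro n; rewrite Rmult_0_l; split; [lra|auto].
  - rewrite Series_scal_l; ring.
Qed.

Lemma S2 k : a k <= Series a.
Proof.
  rewrite (Series_incr_n a (S k)); [|lia|apply S1]. simpl pred.
  assert (a k <= sum_f_R0 a k).
  { destruct k; simpl; [lra|]. pose proof (cond_pos_sum a k (fun n => proj1 (Ha n))); lra. }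
  assert (0 <= Series (fun j => a (S k + j))).
  { apply Series_nonneg; [intro; apply Ha|].
    apply (ex_series_incr_n a (S k)); apply S1. }
  lra.
Qed.

Lemma S3 K : (forall k, (k <= K)%nat -> a k = 0) -> Series a <= (/2)^K.
Proof.
  intro H0. rewrite (Series_incr_n_aux a (S K)) by (intros; apply H0; lia).
  apply Rle_trans with (Series (fun j => (/2)^(S K) * (/2)^j)).
  - apply Series_le.
    + intro n; split; [apply Ha|]. rewrite <- pow_add. apply Ha.
    + apply geom_dom. intro j; split; [rewrite <- pow_add; apply Rlt_le, half_pos|].
      rewrite <- pow_add. apply half_le. lia.
  - rewrite Series_scal_l. rewrite (is_series_unique (pow (/2)) _ geom_series). simpl; lra.
Qed.
End Ser.

Lemma sat_iff Atm Ag (M : model Atm Ag) s f g : sat M s (FIff f g) -> (sat M s f <-> sat M s g).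
Proof. simpl. intros [H1 H2]. split; intro H; apply NNPP; intro C; [apply H1|apply H2]; auto. Qed.

Lemma list_choose {B} (P : B -> nat -> Prop) (l : list B) :
  (forall b, In b l -> exists j, P b j) ->
  exists D, (forall j, In j D -> exists b, In b l /\ P b j) /\ forall b, In b l -> exists j, In j D /\ P b j.
Proof.
  induction l as [|b l IH]; intro H.
  - exists nil; split; [intros j []|intros b []].
  - destruct (H b (or_introl eq_refl)) as [j Hj].
    destruct IH as [D [H1 H2]]; [intros; apply H; right; auto|].
    exists (j :: D); split.
    + intros k [<-|Hk]; [exists b; simpl; auto|]. destruct (H1 k Hk) as [c [? ?]]; exists c; simpl; auto.
    + intros c [<-|Hc]; [exists j; simpl; auto|]. destruct (H2 c Hc) as [k [? ?]]; exists k; simpl; auto.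
Qed.

Section DB.
Variables (Atm Ag : Type).
Lemma dB_spec (x y : pointed Atm Ag) : ~ (forall n, pnbisim n x y) ->
  ~ pnbisim (least_non_bisim x y) x y /\ forall m, (m < least_non_bisim x y)%nat -> pnbisim m x y.
Proof.
  intro H. unfold least_non_bisim. apply epsilon_spec.
  apply not_all_ex_not in H; destruct H as [n Hn].
  destruct (least_ex (fun n => ~ pnbisim n x y) n Hn) as [m [H1 H2]].
  exists m; split; auto. intros k Hk; apply NNPP; apply H2; auto.
Qed.

Lemma D1 n (x y : pointed Atm Ag) : pnbisim n x y -> dB x y < (/2)^n.
Proof.
  intro Hb. unfold dB. destruct (excluded_middle_informative _) as [_|Hn]; [apply half_pos|].
  destruct (dB_spec x y Hn) as [H1 H2].
  destruct (Nat.lt_ge_cases n (least_non_bisim x y)) as [h|h]; [apply half_lt; auto|].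
  exfalso; apply H1. unfold pnbisim in *. eapply nbisim_le; [exact h|exact Hb].
Qed.

Lemma D2 n (x y : pointed Atm Ag) : dB x y < (/2)^n -> pnbisim n x y.
Proof.
  intro H. apply NNPP; intro C. unfold dB in H.
  destruct (excluded_middle_informative _) as [Hall|Hn]; [exact (C (Hall n))|].
  destruct (dB_spec x y Hn) as [H1 H2].
  destruct (Nat.lt_ge_cases n (least_non_bisim x y)) as [h|h]; [exact (C (H2 n h))|].
  pose proof (half_le h). lra.
Qed.
End DB.

Theorem proposition5 (Atm Ag : Type)
  (Hatm : exists l : list Atm, forall p : Atm, In p l)
  (Hag : exists l : list Ag, forall i : Ag, In i l)
  (L : form Atm Ag -> Prop) (HL : normal_logic L)
  (X : pointed Atm Ag -> Prop)
  (Hsound : forall x, X x -> forall f, L f -> psat x f)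
  (Hmb : forall x y, X x -> X y -> (modeq x y <-> bisimilar x y)) :
  exists d : pointed Atm Ag -> pointed Atm Ag -> R,
    in_metric_family L X d /\ same_topology X d (@dB Atm Ag).
Proof.
  destruct Hatm as [la Hla]; destruct Hag as [lg Hlg].
  set (E := fun f g : form Atm Ag => forall z, X z -> (psat z f <-> psat z g)).
  set (e := fun k => let p := Cantor.of_nat k in nth (snd p) (Fn la lg (fst p)) (FTop Atm Ag)).
  assert (He : forall n chi, In chi (Fn la lg n) -> exists k, e k = chi).
  { intros n chi Hin. destruct (In_nth _ _ (FTop Atm Ag) Hin) as [i [_ Hi]].
    exists (Cantor.to_nat (n,i)). unfold e. rewrite Cantor.cancel_of_to. simpl. exact Hi. }
  destruct (@dedupe _ E) with (e := e) as [len [phi [Hinj [Hcov _]]]].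
  { intros a z _; tauto. }
  { intros a b H z Hz; rewrite (H z Hz); tauto. }
  { intros a b c H1 H2 z Hz; rewrite (H1 z Hz); apply H2; auto. }
  set (w := fun k : nat => (/2)^k).
  set (a := fun x y k => if validb len k then w k * dk x y (phi k) else 0).
  assert (Ha : forall x y k, 0 <= a x y k <= (/2)^k).
  { intros x y k; unfold a, w, dk. pose proof (half_pos k).
    destruct (validb len k); [|lra]. destruct (excluded_middle_informative _); lra. }
  assert (Hchi : forall n x, X x -> exists j, validb len j = true /\
            forall y, X y -> (psat x (phi j) <-> psat y (phi j)) -> pnbisim n x y).
  { intros n x Hx. destruct (char_formula la lg Hla Hlg n x) as [chi [Hin [Hxc Hc]]].
    destruct (He _ _ Hin) as [k Hk]. destruct (Hcov k) as [j [Vj Ej]].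
    exists j; split; auto. intros y Hy Hag. apply Hc.
    rewrite Hk in Ej. apply Ej; auto. apply Hag. apply Ej; auto. }
  set (mdep := fix mdep K := match K with O => depth (phi O) | S K => Nat.max (mdep K) (depth (phi (S K))) end).
  assert (Hmdep : forall K k, (k <= K)%nat -> (depth (phi k) <= mdep K)%nat).
  { induction K as [|K IH]; intros k Hk; simpl.
    - replace k with O by lia; lia.
    - destruct (Nat.eq_dec k (S K)) as [->|h]; [lia|]. specialize (IH k ltac:(lia)); lia. }
  exists (dw len phi w). split.
  - exists len, phi, w. split; [|split; [|split; [|split]]].
    + intros j k Vj Vk Hjk Hl. apply (Hinj j k Vj Vk Hjk). intros z Hz.
      apply sat_iff. apply (Hsound z Hz _ Hl).
    + intro psi. set (n := depth psi).
      destruct (list_choose (fun chi j => validb len j = true /\ E chi (phi j)) (Fn la lg n)) as [D [HD1 HD2]].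
      { intros chi Hin. destruct (He _ _ Hin) as [k <-]. apply Hcov. }
      exists D; split.
      * intros j Hj; destruct (HD1 j Hj) as [? [_ [? _]]]; auto.
      * intros x y Hx Hy Hag.
        destruct (AB la lg Hla Hlg n) as [HA HB].
        destruct (HB _ (ppt x)) as [chi [Hin Hxc]].
        destruct (HD2 chi Hin) as [j [HjD [_ Ej]]].
        assert (Hyc : psat y chi).
        { apply Ej; auto. apply Hag; auto. apply Ej; auto. }
        apply (preserve psi (n:=n)); [unfold n; lia|]. exact (HA chi Hin _ _ _ _ Hxc Hyc).
    + intros k _; apply half_pos.
    + apply geom_dom. intro k; pose proof (half_pos k); unfold w; destruct (validb len k); lra.
    + reflexivity.
  - assert (Hd1 : forall x y k, validb len k = true -> ~ (psat x (phi k) <-> psat y (phi k)) ->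
              (/2)^k <= dw len phi w x y).
    { intros x y k Vk Hn. unfold dw. fold (a x y).
      apply Rle_trans with (a x y k); [|apply (S2 _ (Ha x y))].
      unfold a, dk, w; rewrite Vk. destruct (excluded_middle_informative _); [contradiction|lra]. }
    assert (Hd2 : forall x y K, (forall k, (k <= K)%nat -> validb len k = true ->
              (psat x (phi k) <-> psat y (phi k))) -> dw len phi w x y <= (/2)^K).
    { intros x y K Hag. unfold dw. fold (a x y). apply (S3 _ (Ha x y)).
      intros k Hk. unfold a, dk. destruct (validb len k) eqn:V; auto.
      destruct (excluded_middle_informative _) as [_|C]; [ring|]. exfalso; apply C; auto. }
    intro U. unfold open_in. split; intros [HUX HU]; split; auto.
    + intros x Ux. destruct (HU x Ux) as [eps [Heps Hy]].
      destruct (pow_lt_1_zero (/2) ltac:(rewrite Rabs_pos_eq; lra) eps Heps) as [K HK].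
      specialize (HK K (le_n K)). rewrite Rabs_pos_eq in HK by (apply Rlt_le, half_pos).
      exists ((/2)^(mdep K)); split; [apply half_pos|].
      intros y Xy Hdy. apply Hy; auto. apply Rle_lt_trans with ((/2)^K); auto.
      apply Hd2. intros k Hk _. apply (preserve (phi k) (n:=mdep K)); [auto|].
      exact (D2 _ _ _ Hdy).
    + intros x Ux. destruct (HU x Ux) as [eps [Heps Hy]].
      destruct (pow_lt_1_zero (/2) ltac:(rewrite Rabs_pos_eq; lra) eps Heps) as [n Hn].
      specialize (Hn n (le_n n)). rewrite Rabs_pos_eq in Hn by (apply Rlt_le, half_pos).
      destruct (Hchi n x (HUX x Ux)) as [j [Vj Hj]].
      exists ((/2)^j); split; [apply half_pos|].
      intros y Xy Hdy. apply Hy; auto. apply Rlt_trans with ((/2)^n); auto.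
      apply D1. apply Hj; auto. apply NNPP; intro C.
      pose proof (Hd1 x y j Vj C). lra.
Qed.
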